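(* Let $(p_n)$ be a sequence with $0<\liminf_{n\to\infty} p_n\leq \limsup_{n\to\infty} p_n<1$, let $p=p_n$, $q=q_n=1-p_n$ and $V=npq$, and fix $M>0$. For $\varphi>0$ put $R=|pe^{i\varphi}+q|^n$ and \[ R_2=-\tfrac{1}{2}V,\quad R_4=\tfrac{1}{4}V\big(\tfrac{1}{6}-pq\big),\quad R_6=-\tfrac{1}{6}V\big(\tfrac{1}{120}-\tfrac{1}{4}pq+p^2q^2\big). \] Then, as $n\to\infty$, uniformly for $0<\varphi\leq M/V^{1/4}$, \[ R= e^{R_2\varphi^2}\Big(1+R_4\varphi^4+R_6\varphi^6+\frac{1}{2}R_4^2\varphi^8+\sum_{k=1}^3 O(n^k\varphi^{2k+6})\Big), \] i.e. there are $C>0$ and $N$ such that for all $n\geq N$ and all $0<\varphi\leq M/V^{1/4}$ the quantity $e^{-R_2\varphi^2}R-\big(1+R_4\varphi^4+R_6\varphi^6+\frac{1}{2}R_4^2\varphi^8\big)$ has absolute value at most $C\sum_{k=1}^3 n^k\varphi^{2k+6}$. *)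

(* Defs.v *)
From Stdlib Require Import Reals.
From Coquelicot Require Import Coquelicot.
Open Scope R_scope.

Definition expi (phi : R) : C := (cos phi, sin phi).

Definition Rmod (p : R) (n : nat) (phi : R) : R :=
  (Cmod (RtoC p * expi phi + RtoC (1 - p))) ^ n.

Definition Vvar (p : R) (n : nat) : R := INR n * p * (1 - p).

Definition R2 (p : R) (n : nat) : R := - / 2 * Vvar p n.
Definition R4 (p : R) (n : nat) : R :=
  / 4 * Vvar p n * (/ 6 - p * (1 - p)).
Definition R6 (p : R) (n : nat) : R :=
  - / 6 * Vvar p n * (/ 120 - / 4 * (p * (1 - p)) + p ^ 2 * (1 - p) ^ 2).

(* Main.v *)
Require Import Defs.
From Stdlib Require Import Reals Lra Lia Psatz.
From Coquelicot Require Import Coquelicot.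
Open Scope R_scope.

Lemma mvt_bound (f f' : R -> R) (K B : R) (k : nat) :
  0 <= K ->
  (forall x, Rabs x <= B -> derivable_pt_lim f x (f' x)) -> f 0 = 0 ->
  (forall x, Rabs x <= B -> Rabs (f' x) <= K * Rabs x ^ k) ->
  forall x, Rabs x <= B -> Rabs (f x) <= K * Rabs x ^ (S k).
Proof.
  intros HK Hd H0 Hb x Hx.
  destruct (Rtotal_order x 0) as [Hlt|[Heq|Hgt]].
  - destruct (MVT_cor2 f f' x 0 Hlt) as [c [Hc1 Hc2]].
    { intros c Hc. apply Hd. unfold Rabs in *. destruct (Rcase_abs c), (Rcase_abs x); lra. }
    rewrite H0 in Hc1.
    assert (Hcx : Rabs c <= Rabs x) by (unfold Rabs; destruct (Rcase_abs c), (Rcase_abs x); lra).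
    assert (Hc : Rabs c <= B) by lra.
    replace (f x) with (- (f' c * (0 - x))) by lra.
    rewrite Rabs_Ropp, Rabs_mult. simpl.
    replace (Rabs (0 - x)) with (Rabs x) by (rewrite <- Rabs_Ropp; f_equal; lra).
    specialize (Hb c Hc).
    assert (Rabs c ^ k <= Rabs x ^ k) by (apply pow_incr; split; [apply Rabs_pos|lra]).
    assert (0 <= Rabs x) by apply Rabs_pos.
    apply Rle_trans with (K * Rabs c ^ k * Rabs x).
    + apply Rmult_le_compat_r; auto.
    + assert (K * Rabs c ^ k <= K * Rabs x ^ k) by (apply Rmult_le_compat_l; auto).
      nra.
  - subst. rewrite H0, Rabs_R0. simpl. nra.
  - destruct (MVT_cor2 f f' 0 x Hgt) as [c [Hc1 Hc2]].
    { intros c Hc. apply Hd. unfold Rabs in *. destruct (Rcase_abs c), (Rcase_abs x); lra. }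
    rewrite H0 in Hc1.
    assert (Hcx : Rabs c <= Rabs x) by (unfold Rabs; destruct (Rcase_abs c), (Rcase_abs x); lra).
    assert (Hc : Rabs c <= B) by lra.
    replace (f x) with (f' c * (x - 0)) by lra.
    rewrite Rabs_mult. simpl.
    replace (x - 0) with x by lra.
    specialize (Hb c Hc).
    assert (Rabs c ^ k <= Rabs x ^ k) by (apply pow_incr; split; [apply Rabs_pos|lra]).
    assert (0 <= Rabs x) by apply Rabs_pos.
    apply Rle_trans with (K * Rabs c ^ k * Rabs x).
    + apply Rmult_le_compat_r; auto.
    + assert (K * Rabs c ^ k <= K * Rabs x ^ k) by (apply Rmult_le_compat_l; auto).
      nra.
Qed.

Lemma exp_bound (B x : R) : Rabs x <= B ->
  Rabs (exp x - (1 + x + x ^ 2 / 2)) <= exp B * Rabs x ^ 3.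
Proof.
  intros Hx.
  assert (HeB : 0 <= exp B) by (left; apply exp_pos).
  assert (H1 : forall y, Rabs y <= B -> Rabs (exp y - 1) <= exp B * Rabs y ^ 1).
  { apply (mvt_bound (fun y => exp y - 1) exp (exp B) B 0); auto.
    - intros y _. apply is_derive_Reals. auto_derive; auto; try field.
    - rewrite exp_0; ring.
    - intros y Hy. simpl. rewrite Rmult_1_r, Rabs_right by (left; apply exp_pos).
      assert (y <= B) by (unfold Rabs in Hy; destruct (Rcase_abs y); lra).
      destruct (Rle_lt_or_eq_dec y B H); [left; apply exp_increasing; auto|subst; lra]. }
  assert (H2 : forall y, Rabs y <= B -> Rabs (exp y - 1 - y) <= exp B * Rabs y ^ 2).
  { apply (mvt_bound (fun y => exp y - 1 - y) (fun y => exp y - 1) (exp B) B 1); auto.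
    - intros y _. apply is_derive_Reals. auto_derive; auto; try field.
    - cbv beta; rewrite exp_0; try field; try lra. }
  assert (H3 : forall y, Rabs y <= B -> Rabs (exp y - 1 - y - y^2/2) <= exp B * Rabs y ^ 3).
  { apply (mvt_bound (fun y => exp y - 1 - y - y^2/2) (fun y => exp y - 1 - y) (exp B) B 2); auto.
    - intros y _. apply is_derive_Reals. auto_derive; auto; try field.
    - cbv beta; rewrite exp_0; try field; try lra. }
  replace (exp x - (1 + x + x ^ 2 / 2)) with (exp x - 1 - x - x^2/2) by ring.
  auto.
Qed.

Lemma ln_bound (u : R) : Rabs u <= /2 ->
  Rabs (ln (1 - u) - (- u - u ^ 2 / 2 - u ^ 3 / 3)) <= 2 * Rabs u ^ 4.
Proof.
  intros Hu.
  assert (H := mvt_bound (fun y => ln (1 - y) + y + y^2/2 + y^3/3)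
     (fun y => - / (1 - y) + 1 + y + y ^ 2) 2 (/2) 3).
  replace (ln (1 - u) - (- u - u ^ 2 / 2 - u ^ 3 / 3))
    with (ln (1 - u) + u + u^2/2 + u^3/3) by ring.
  apply H; auto; try lra.
  - intros y Hy. apply is_derive_Reals.
    assert (0 < 1 - y) by (unfold Rabs in Hy; destruct (Rcase_abs y); lra).
    auto_derive; auto. field. lra.
  - cbv beta. replace (1 - 0) with 1 by ring. rewrite ln_1. field.
  - intros y Hy.
    assert (0 < 1 - y) by (unfold Rabs in Hy; destruct (Rcase_abs y); lra).
    assert (1 - y >= /2) by (unfold Rabs in Hy; destruct (Rcase_abs y); lra).
    replace (- / (1 - y) + 1 + y + y ^ 2) with (- (y ^ 3) * / (1 - y)) by (field; lra).
    rewrite Rabs_mult, Rabs_Ropp, RPow_abs, Rabs_inv, (Rabs_right (1 - y)) by lra.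
    assert (0 <= Rabs y ^ 3) by (apply pow_le, Rabs_pos).
    assert (/ (1 - y) <= 2).
    { replace 2 with (/ / 2) by field. apply Rinv_le_contravar; lra. }
    assert (0 <= Rabs (y ^ 3)) by apply Rabs_pos.
    rewrite (Rmult_comm 2). apply Rmult_le_compat_l; auto.
Qed.

Lemma cos_approx3 t : cos_approx t 3 = 1 - t^2/2 + t^4/24 - t^6/720.
Proof.
  unfold cos_approx, cos_term. cbn [sum_f_R0].
  change (2*0)%nat with 0%nat. change (2*1)%nat with 2%nat. change (2*2)%nat with 4%nat. change (2*3)%nat with 6%nat.
  rewrite !INR_IZR_INZ.
  change (Z.of_nat (Factorial.fact 0)) with 1%Z.
  change (Z.of_nat (Factorial.fact 2)) with 2%Z.
  change (Z.of_nat (Factorial.fact 4)) with 24%Z.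
  change (Z.of_nat (Factorial.fact 6)) with 720%Z.
  simpl. field.
Qed.
Lemma cos_approx4 t : cos_approx t 4 = 1 - t^2/2 + t^4/24 - t^6/720 + t^8/40320.
Proof.
  unfold cos_approx. cbn [sum_f_R0]. fold (sum_f_R0 (cos_term t) 3). fold (cos_approx t 3).
  rewrite cos_approx3. unfold cos_term.
  change (2*4)%nat with 8%nat.
  rewrite !INR_IZR_INZ.
  change (Z.of_nat (Factorial.fact 8)) with 40320%Z.
  simpl. field.
Qed.

Lemma abs_le_of (x y : R) : - y <= x <= y -> Rabs x <= y.
Proof. intros [H1 H2]. unfold Rabs; destruct (Rcase_abs x); lra. Qed.

Lemma core (s t : R) : 0 < s <= /4 -> 0 < t <= 1 ->
  Rabs (/2 * ln (1 - 2*s*(1 - cos t)) + s*t^2/2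
        - (/4 * s * (/6 - s) * t^4 - /6 * s * (/120 - /4*s + s^2) * t^6)) <= 10 * t^8.
Proof.
  intros Hs Ht.
  assert (HPI : t <= PI/2) by (pose proof PI2_1; lra).
  destruct (cos_bound t 1 ltac:(pose proof PI2_1; lra) HPI) as [Hc1 Hc2].
  change (2*1+1)%nat with 3%nat in Hc1. change (2*(1+1))%nat with 4%nat in Hc2.
  rewrite cos_approx3 in Hc1. rewrite cos_approx4 in Hc2.
  set (c := 1 - cos t) in *.
  pose (d := t^2/2 - t^4/24 + t^6/720 - c).
  assert (Hd : 0 <= d <= t^8/40320) by (unfold d, c; lra).
  set (u := 2 * s * c).
  assert (Ht2 : 0 < t^2) by (apply pow_lt; lra).
  assert (Ht21 : t^2 <= 1) by (simpl; nra).
  assert (Ht4 : t^4 <= t^2) by (replace (t^4) with (t^2*t^2) by ring; nra).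
  assert (Ht6 : t^6 <= t^4) by (replace (t^6) with (t^4*t^2) by ring; nra).
  assert (Ht8 : t^8 <= t^6) by (replace (t^8) with (t^6*t^2) by ring; nra).
  assert (Ht4p : 0 < t^4) by (apply pow_lt; lra).
  assert (Ht6p : 0 < t^6) by (apply pow_lt; lra).
  assert (Ht8p : 0 < t^8) by (apply pow_lt; lra).
  assert (Hcb : 0 <= c <= t^2/2) by (unfold d in Hd; lra).
  assert (Hu : 0 <= u <= s * t^2) by (unfold u; nra).
  assert (Hu' : Rabs u <= /2) by (apply abs_le_of; nra).
  pose proof (ln_bound u Hu') as Hel.
  set (el := ln (1 - u) - (- u - u ^ 2 / 2 - u ^ 3 / 3)) in Hel.
  pose (a := s * t^2 - s * t^4 / 12).
  pose (r := u - a).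
  pose (v := s * t^2).
  assert (Hid : /2 * ln (1 - u) + s*t^2/2
        - (/4 * s * (/6 - s) * t^4 - /6 * s * (/120 - /4*s + s^2) * t^6)
        = s * d - s^2 * t^8 / 576 - (2*a*r + r^2)/4 - (u^3 - v^3)/6 + el/2).
  { replace (ln (1 - u)) with (el + (- u - u ^ 2 / 2 - u ^ 3 / 3)) by (unfold el; ring).
    unfold r, a, v, u. replace c with (t^2/2 - t^4/24 + t^6/720 - d) by (unfold d; ring).
    field. }
  fold u. rewrite Hid.
  assert (Hr : r = s * t^6/360 - 2 * s * d) by (unfold r, a, u; replace c with (t^2/2 - t^4/24 + t^6/720 - d) by (unfold d; ring); field).
  assert (Hrb : Rabs r <= t^6) by (rewrite Hr; apply abs_le_of; nra).
  assert (Hab : 0 <= a <= t^2) by (unfold a; nra).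
  assert (P1 : Rabs (s * d) <= t^8) by (apply abs_le_of; nra).
  assert (Hs2 : 0 <= s^2 <= 1) by (simpl; nra).
  assert (P2 : Rabs (s^2 * t^8 / 576) <= t^8) by (apply abs_le_of; nra).
  assert (P3 : Rabs ((2*a*r + r^2)/4) <= t^8).
  { assert (Rabs (a*r) <= t^8).
    { rewrite Rabs_mult, Rabs_right by lra.
      replace (t^8) with (t^2*t^6) by ring. apply Rmult_le_compat; try lra; apply Rabs_pos. }
    assert (Rabs (r^2) <= t^8).
    { rewrite <- RPow_abs. replace (t^8) with (t^6*t^2) by ring. simpl. rewrite Rmult_1_r.
      pose proof (Rabs_pos r). apply Rmult_le_compat; try lra. }
    apply abs_le_of. revert H H0. unfold Rabs. destruct (Rcase_abs (a*r)), (Rcase_abs (r^2)); intros; lra. }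
  assert (P4 : Rabs ((u^3 - v^3)/6) <= t^8).
  { assert (Huv : Rabs (u - v) <= t^4).
    { replace (u - v) with (r - s*t^4/12) by (unfold r, a, v; ring).
      apply abs_le_of. revert Hrb. unfold Rabs. destruct (Rcase_abs r); intros; nra. }
    assert (Hq : 0 <= u^2 + u*v + v^2 <= 3 * t^4).
    { unfold v in *. replace (t^4) with (t^2*t^2) by ring. nra. }
    replace ((u^3 - v^3)/6) with ((u - v) * (u^2 + u*v + v^2) / 6) by (unfold v; field).
    unfold Rdiv. rewrite Rabs_mult, Rabs_mult, (Rabs_right (u^2+u*v+v^2)) by lra.
    rewrite (Rabs_right (/6)) by lra.
    assert (Rabs (u - v) * (u ^ 2 + u * v + v ^ 2) <= t^4 * (3*t^4)).
    { apply Rmult_le_compat; try lra; apply Rabs_pos. }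
    replace (t^8) with (t^4*t^4) by ring. lra. }
  assert (P5 : Rabs (el/2) <= t^8).
  { unfold Rdiv. rewrite Rabs_mult, (Rabs_right (/2)) by lra.
    assert (Rabs u ^ 4 <= t^8).
    { rewrite Rabs_right by lra. replace (t^8) with ((t^2)^4) by ring.
      apply pow_incr. nra. }
    lra. }
  apply abs_le_of.
  revert P1 P2 P3 P4 P5.
  unfold Rabs.
  destruct (Rcase_abs (s*d)), (Rcase_abs (s ^ 2 * t ^ 8 / 576)), (Rcase_abs ((2 * a * r + r ^ 2) / 4)),
     (Rcase_abs ((u ^ 3 - v ^ 3) / 6)), (Rcase_abs (el/2)); intros; lra.
Qed.

Lemma abs_mul_le x y X Y : Rabs x <= X -> Rabs y <= Y -> Rabs (x*y) <= X*Y.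
Proof. intros. rewrite Rabs_mult. apply Rmult_le_compat; auto; apply Rabs_pos. Qed.

Lemma Rmod_eq (p t : R) (n : nat) :
  0 < 1 - 2 * (p * (1 - p)) * (1 - cos t) ->
  Rmod p n t = exp (INR n * (/2 * ln (1 - 2 * (p * (1 - p)) * (1 - cos t)))).
Proof.
  intros HX. set (X := 1 - 2 * (p * (1 - p)) * (1 - cos t)) in *.
  assert (HC : Cmod (RtoC p * expi t + RtoC (1 - p)) = sqrt X).
  { unfold Cmod, expi, RtoC. simpl. f_equal.
    pose proof (sin2_cos2 t) as Hsc. unfold Rsqr in Hsc.
    unfold X. nra. }
  unfold Rmod. rewrite HC.
  assert (Hs : 0 < sqrt X) by (apply sqrt_lt_R0; auto).
  rewrite <- Rpower_pow by auto. unfold Rpower. f_equal. f_equal.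
  assert (ln X = ln (sqrt X) + ln (sqrt X)).
  { rewrite <- ln_mult by auto. rewrite sqrt_sqrt; lra. }
  lra.
Qed.

Lemma bounds_p (p : nat -> R) :
  Rbar_lt (Finite 0) (LimInf_seq p) ->
  Rbar_lt (LimSup_seq p) (Finite 1) ->
  exists a b N0, 0 < a /\ b < 1 /\ forall n, (N0 <= n)%nat -> a <= p n <= b.
Proof.
  intros H1 H2.
  destruct (ex_LimInf_seq p) as [li Hli].
  destruct (ex_LimSup_seq p) as [ls Hls].
  rewrite (is_LimInf_seq_unique _ _ Hli) in H1.
  rewrite (is_LimSup_seq_unique _ _ Hls) in H2.
  assert (HA : exists a N1, 0 < a /\ forall n, (N1 <= n)%nat -> a <= p n).
  { destruct li as [l| |]; simpl in H1.
    - destruct (Hli (mkposreal (l/2) ltac:(lra))) as [_ [N1 HN1]].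
      exists (l/2), N1. split; [lra|]. intros n Hn. specialize (HN1 n Hn). simpl in HN1. lra.
    - destruct (Hli (1/2)) as [N1 HN1]. exists (1/2), N1. split; [lra|]. intros n Hn.
      specialize (HN1 n Hn). lra.
    - contradiction. }
  assert (HB : exists b N2, b < 1 /\ forall n, (N2 <= n)%nat -> p n <= b).
  { destruct ls as [l| |]; simpl in H2.
    - destruct (Hls (mkposreal ((1-l)/2) ltac:(lra))) as [_ [N2 HN2]].
      exists ((1+l)/2), N2. split; [lra|]. intros n Hn. specialize (HN2 n Hn). simpl in HN2. lra.
    - contradiction.
    - destruct (Hls (1/2)) as [N2 HN2]. exists (1/2), N2. split; [lra|]. intros n Hn.
      specialize (HN2 n Hn). lra. }
  destruct HA as [a [N1 [Ha HN1]]]. destruct HB as [b [N2 [Hb HN2]]].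
  exists a, b, (Nat.max N1 N2). repeat split; auto.
  - apply HN1; lia.
  - apply HN2; lia.
Qed.

Theorem lemma3p2 (p : nat -> R) (M : R) :
  Rbar_lt (Finite 0) (LimInf_seq p) ->
  Rbar_le (LimInf_seq p) (LimSup_seq p) ->
  Rbar_lt (LimSup_seq p) (Finite 1) ->
  0 < M ->
  exists C : R, 0 < C /\ exists N : nat,
    forall (n : nat) (phi : R), (N <= n)%nat ->
      0 < phi -> phi <= M / Rpower (Vvar (p n) n) (/ 4) ->
      Rabs (exp (- R2 (p n) n * phi ^ 2) * Rmod (p n) n phi
            - (1 + R4 (p n) n * phi ^ 4 + R6 (p n) n * phi ^ 6
                 + / 2 * (R4 (p n) n) ^ 2 * phi ^ 8))
      <= C * (INR n * phi ^ 8 + INR n ^ 2 * phi ^ 10 + INR n ^ 3 * phi ^ 12).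
Proof.
  intros H1 _ H3 HM.
  destruct (bounds_p p H1 H3) as [a [b [N0 [Ha [Hb HN0]]]]].
  assert (Hab : a <= b) by (destruct (HN0 N0 (le_n _)); lra).
  set (smin := a * (1 - b)).
  assert (Hsmin : 0 < smin) by (unfold smin; nra).
  set (M4 := M ^ 4).
  assert (HM4 : 0 < M4) by (unfold M4; apply pow_lt; lra).
  set (Z := M4 / smin).
  set (B := 12 * Z).
  set (C := 100 + 1728 * exp B).
  assert (HeB : 0 < exp B) by apply exp_pos.
  exists C. split; [unfold C; lra|].
  destruct (INR_archimed smin M4 Hsmin) as [n1 Hn1].
  exists (Nat.max (Nat.max N0 n1) 1).
  intros n t Hn Ht Htle.
  set (pn := p n) in *.
  destruct (HN0 n ltac:(lia)) as [Hpa Hpb]. fold pn in Hpa, Hpb.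
  set (s := pn * (1 - pn)).
  assert (Hs : smin <= s <= /4).
  { unfold s, smin. split.
    - assert (0 <= (pn - a) * (1 - pn)) by (apply Rmult_le_pos; lra).
      assert (0 <= a * (b - pn)) by (apply Rmult_le_pos; lra). nra.
    - assert (0 <= (pn - /2)^2) by (apply pow2_ge_0). nra. }
  set (m := INR n).
  assert (Hm1 : 1 <= m) by (unfold m; apply (le_INR 1); lia).
  assert (Hmn1 : INR n1 <= m) by (unfold m; apply le_INR; lia).
  assert (HV : Vvar pn n = m * s) by (unfold Vvar, m, s; ring).
  rewrite HV in Htle.
  assert (HVM : M4 <= m * s) by nra.
  set (rho := Rpower (m * s) (/4)) in *.
  assert (Hrho4 : rho ^ 4 = m * s).
  { unfold rho. rewrite <- Rpower_pow by (unfold Rpower; apply exp_pos).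
    rewrite Rpower_mult. replace (/4 * INR 4) with 1 by (simpl; field).
    apply Rpower_1. lra. }
  assert (HrhoM : M <= rho).
  { unfold rho. replace M with (Rpower M4 (/4)) at 1.
    - apply Rle_Rpower_l; lra.
    - unfold M4. rewrite <- Rpower_pow by lra. rewrite Rpower_mult.
      replace (INR 4 * /4) with 1 by (simpl; field). apply Rpower_1; lra. }
  assert (Hrho : 0 < rho) by lra.
  assert (Htr : t * rho <= M).
  { apply Rmult_le_reg_r with (/ rho). apply Rinv_0_lt_compat; lra.
    replace (t * rho * / rho) with t by (field; lra). exact Htle. }
  assert (Ht1 : t <= 1).
  { assert (t * rho <= 1 * rho) by lra. nra. }
  assert (Ht4V : t^4 * (m*s) <= M4).
  { rewrite <- Hrho4. replace (t^4 * rho^4) with ((t*rho)^4) by ring.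
    unfold M4. apply pow_incr. nra. }
  assert (Hz : m * t^4 <= Z).
  { unfold Z. apply Rmult_le_reg_r with smin; auto.
    replace (M4 / smin * smin) with M4 by (field; lra).
    assert (0 <= m * t^4) by (assert (0 < t^4) by (apply pow_lt; lra); nra).
    nra. }
  assert (HPI : t <= PI/2) by (pose proof PI2_1; lra).
  destruct (cos_bound t 1 ltac:(pose proof PI2_1; lra) HPI) as [Hc1 _].
  change (2*1+1)%nat with 3%nat in Hc1. rewrite cos_approx3 in Hc1.
  assert (Ht2 : 0 < t^2) by (apply pow_lt; lra).
  assert (Ht21 : t^2 <= 1) by (simpl; nra).
  assert (Ht4 : t^4 <= t^2) by (replace (t^4) with (t^2*t^2) by ring; nra).
  assert (Ht6 : t^6 <= t^4) by (replace (t^6) with (t^4*t^2) by ring; nra).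
  assert (Hcc : 1 - cos t <= t^2/2) by nra.
  assert (HX : 0 < 1 - 2 * s * (1 - cos t)) by nra.
  rewrite (Rmod_eq pn t n HX). fold s m.
  set (Lc := /2 * ln (1 - 2 * s * (1 - cos t)) + s * t^2/2).
  assert (HL : exp (- R2 pn n * t ^ 2) * exp (m * (/ 2 * ln (1 - 2 * s * (1 - cos t)))) = exp (m * Lc)).
  { rewrite <- exp_plus. f_equal. unfold R2, Lc. rewrite HV. field. }
  rewrite HL.
  set (r4 := R4 pn n). set (r6 := R6 pn n).
  assert (HR4 : r4 = /4 * m * s * (/6 - s)) by (unfold r4, R4; rewrite HV; unfold s; ring).
  assert (HR6 : r6 = - /6 * m * s * (/120 - /4 * s + s^2)) by (unfold r6, R6; rewrite HV; unfold s; ring).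
  assert (Hr4 : Rabs r4 <= m) by (rewrite HR4; apply abs_le_of;
     assert (-1 <= s * (/6 - s) <= 1) by nra; nra).
  assert (Hr6 : Rabs r6 <= m) by (rewrite HR6; apply abs_le_of;
     assert (-1 <= s * (/120 - /4 * s + s^2) <= 1) by nra; nra).
  set (A := r4 * t^4 + r6 * t^6).
  set (D := m * Lc - A).
  assert (HD : Rabs D <= 10 * m * t^8).
  { replace D with (m * (/2 * ln (1 - 2*s*(1 - cos t)) + s*t^2/2
        - (/4 * s * (/6 - s) * t^4 - /6 * s * (/120 - /4*s + s^2) * t^6)))
      by (unfold D, A, Lc; rewrite HR4, HR6; ring).
    rewrite Rabs_mult, (Rabs_right m) by lra.
    pose proof (core s t ltac:(lra) ltac:(lra)).
    replace (10 * m * t^8) with (m * (10 * t^8)) by ring.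
    apply Rmult_le_compat_l; lra. }
  set (L := m * Lc) in *.
  assert (HLAD : L = A + D) by (unfold D; ring).
  assert (Ht4p : 0 < t^4) by (apply pow_lt; lra).
  assert (Ht6p : 0 < t^6) by (apply pow_lt; lra).
  assert (Ht8p : 0 < t^8) by (apply pow_lt; lra).
  assert (Ht8 : t^8 <= t^4) by (replace (t^8) with (t^4*t^4) by ring; nra).
  assert (Habs : forall k, Rabs (t^k) = t^k) by (intros k; apply Rabs_right; left; apply pow_lt; lra).
  assert (HA : Rabs A <= 2 * m * t^4).
  { unfold A. eapply Rle_trans; [apply Rabs_triang|].
    pose proof (abs_mul_le r4 (t^4) m (t^4) Hr4 (Req_le _ _ (Habs 4%nat))).
    pose proof (abs_mul_le r6 (t^6) m (t^6) Hr6 (Req_le _ _ (Habs 6%nat))).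
    assert (m * t^6 <= m * t^4) by (apply Rmult_le_compat_l; lra). lra. }
  assert (HLb : Rabs L <= 12 * m * t^4).
  { rewrite HLAD. eapply Rle_trans; [apply Rabs_triang|].
    assert (m * t^8 <= m * t^4) by (apply Rmult_le_compat_l; lra). lra. }
  assert (HE2 := exp_bound B L ltac:(unfold B; lra)).
  assert (HL3 : Rabs L ^ 3 <= 1728 * (m^3 * t^12)).
  { replace (1728 * (m^3 * t^12)) with ((12 * m * t^4)^3) by ring.
    apply pow_incr. split; [apply Rabs_pos|lra]. }
  set (X1 := m * t^8). set (X2 := m^2 * t^10). set (X3 := m^3 * t^12).
  assert (HX1 : 0 <= X1) by (unfold X1; nra).
  assert (HX2 : 0 <= X2) by (unfold X2; assert (0 < t^10) by (apply pow_lt; lra); assert (0 <= m^2) by apply pow2_ge_0; nra).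
  assert (HX3 : 0 <= X3) by (unfold X3; assert (0 < t^12) by (apply pow_lt; lra); assert (0 <= m^3) by (apply pow_le; lra); nra).
  assert (Hm12 : m^2 * t^12 <= X2).
  { unfold X2. replace (t^12) with (t^10 * t^2) by ring.
    assert (0 <= m^2 * t^10) by (assert (0 < t^10) by (apply pow_lt; lra); assert (0 <= m^2) by apply pow2_ge_0; nra).
    replace (m^2 * (t^10 * t^2)) with ((m^2 * t^10) * t^2) by ring. nra. }
  assert (Hm16 : m^2 * t^16 <= X2).
  { unfold X2. replace (t^16) with (t^10 * t^6) by ring.
    assert (0 <= m^2 * t^10) by (assert (0 < t^10) by (apply pow_lt; lra); assert (0 <= m^2) by apply pow2_ge_0; nra).
    assert (t^6 <= 1) by lra.
    replace (m^2 * (t^10 * t^6)) with ((m^2 * t^10) * t^6) by ring. nra. }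
  assert (T1 : Rabs (r4 * r6 * t^10) <= X2).
  { unfold X2. replace (m^2 * t^10) with (m * m * t^10) by ring.
    apply abs_mul_le; [apply abs_mul_le; auto| apply Req_le, Habs]. }
  assert (T2 : Rabs (r6^2 * t^12 / 2) <= X2).
  { assert (Rabs (r6^2 * t^12 / 2) <= m^2 * t^12 / 2).
    { unfold Rdiv. apply abs_mul_le; [|rewrite Rabs_right; lra].
      apply abs_mul_le; [|apply Req_le, Habs].
      rewrite <- RPow_abs. apply pow_incr. split; [apply Rabs_pos|auto]. }
    assert (0 <= m^2 * t^12) by (assert (0 < t^12) by (apply pow_lt; lra); assert (0 <= m^2) by apply pow2_ge_0; nra).
    lra. }
  assert (T3 : Rabs (A * D) <= 20 * X2).
  { assert (Rabs (A * D) <= (2 * m * t^4) * (10 * m * t^8)) by (apply abs_mul_le; auto).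
    replace ((2 * m * t^4) * (10 * m * t^8)) with (20 * (m^2 * t^12)) in H by ring. lra. }
  assert (T4 : Rabs (D^2/2) <= 50 * X2).
  { assert (Rabs (D^2/2) <= (10 * m * t^8) * (10 * m * t^8) * /2).
    { unfold Rdiv. apply abs_mul_le; [|rewrite Rabs_right; lra].
      simpl. rewrite Rmult_1_r. apply abs_mul_le; auto. }
    replace ((10 * m * t^8) * (10 * m * t^8) * /2) with (50 * (m^2 * t^16)) in H by field. lra. }
  assert (T0 : Rabs D <= 10 * X1) by (unfold X1; lra).
  assert (TE : Rabs (exp L - (1 + L + L ^ 2 / 2)) <= 1728 * exp B * X3).
  { unfold X3. assert (exp B * Rabs L ^ 3 <= exp B * (1728 * (m^3 * t^12))) by (apply Rmult_le_compat_l; lra). lra. }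
  replace (exp L - (1 + r4 * t ^ 4 + r6 * t ^ 6 + / 2 * r4 ^ 2 * t ^ 8))
    with ((exp L - (1 + L + L ^ 2 / 2)) + D + r4 * r6 * t^10 + r6^2 * t^12 / 2 + A * D + D^2/2)
    by (rewrite HLAD; unfold A; field).
  assert (Hadd : forall x y X Y, Rabs x <= X -> Rabs y <= Y -> Rabs (x + y) <= X + Y).
  { intros x y X Y Hx Hy. eapply Rle_trans; [apply Rabs_triang|lra]. }
  eapply Rle_trans.
  { apply Hadd; [apply Hadd; [apply Hadd; [apply Hadd; [apply Hadd|]|]|]|]; eassumption. }
  assert (C * X1 >= 10 * X1) by (unfold C; nra).
  assert (C * X2 >= 72 * X2) by (unfold C; nra).
  assert (C * X3 >= 1728 * exp B * X3) by (unfold C; nra).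
  lra.
Qed.
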